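(* Let $(Q,\rightarrow)$ be a finite transition system, $\mathscr{R}$ a preorder on $Q$ and $\mathscr{P}\subseteq\mathscr{R}$ an equivalence relation. Then the following are equivalent: (i) for all $b,d,d'\in Q$ with $d\,\mathscr{P}\,d'$: $d\in\rightarrow^{-1}(\mathscr{R}(b))\iff d'\in\rightarrow^{-1}(\mathscr{R}(b))$; (ii) $\mathscr{P}\circ\rightarrow_{\mathscr{R}}^{-1}\subseteq\rightarrow^{-1}\circ[\cdot]_{\mathscr{R}}$, i.e. whenever $c\,\mathscr{P}\,d$ and $c\rightarrow_{\mathscr{R}} c'$, there is $d'\in[c']_{\mathscr{R}}$ with $d\rightarrow d'$.
   Context: $\mathscr{R}(X)=\{q'\mid\exists q\in X.\ q\,\mathscr{R}\,q'\}$, $\rightarrow^{-1}(Y)=\{q\mid\exists y\in Y.\ q\rightarrow y\}$, $\mathscr{S}\circ\mathscr{R}=\{(x,y)\mid\exists z.\ x\,\mathscr{R}\,z\wedge z\,\mathscr{S}\,y\}$. A preorder is a reflexive transitive relation; $[q]_{\mathscr{R}}=\{q'\mid q\,\mathscr{R}\,q'\wedge q'\,\mathscr{R}\,q\}$ and $[\cdot]_{\mathscr{R}}=\bigcup_{q\in Q}\{q\}\times[q]_{\mathscr{R}}$. A transition $q\rightarrow q'$ is $\mathscr{R}$-maximal, $q\rightarrow_{\mathscr{R}}q'$, if for all $q''$, ($q\rightarrow q''$ and $q'\,\mathscr{R}\,q''$) implies $q''\in[q']_{\mathscr{R}}$. *)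

(* Defs.v *)
(* a finite transition system is a finType Q with a
   boolean transition relation (trans : rel Q). *)
From mathcomp Require Import all_boot.
Set Implicit Arguments. Unset Strict Implicit. Unset Printing Implicit Defensive.

Section Defs.
Variable Q : finType.

Definition rimage (R : rel Q) (X : Q -> Prop) : Q -> Prop :=
  fun q' => exists q, X q /\ R q q'.

Definition rpreimage (T : rel Q) (Y : Q -> Prop) : Q -> Prop :=
  fun q => exists y, Y y /\ T q y.

Definition rclass (R : rel Q) (q : Q) : Q -> Prop :=
  fun q' => R q q' /\ R q' q.

Definition is_preorder (R : rel Q) : Prop := reflexive R /\ transitive R.

Definition is_equivalence (P : rel Q) : Prop :=
  [/\ reflexive P, symmetric P & transitive P].

Definition maxtrans (T R : rel Q) (q q' : Q) : Prop :=
  T q q' /\ forall q'', T q q'' -> R q' q'' -> rclass R q' q''.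
End Defs.

(* Main.v *)
Require Import Defs.
From mathcomp Require Import all_boot.
From Stdlib Require Import Classical.

Lemma exists_max (Q : finType) (T R : rel Q) (d : Q) :
  is_preorder R ->
  forall z, T d z -> exists z', R z z' /\ maxtrans T R d z'.
Proof.
move=> [Rr Rt].
pose n z := #|[pred u | T d u && R z u && ~~ R u z]|.
suff H : forall k z, n z <= k -> T d z -> exists z', R z z' /\ maxtrans T R d z'.
  by move=> z; exact: (H (n z)).
elim=> [|k IH] z Hn Tz;
 (case: (classic (exists w, T d w /\ R z w /\ ~~ R w z)) => [[w [Tw [Rzw Hw]]]|Hno];
  [ have Hlt : n w < n z;
      [ apply: proper_card; apply/properP; split;
      [ apply/subsetP=> u; rewrite !inE => /andP [/andP [Tu Rwu] Hu];
        rewrite Tu (Rt _ _ _ Rzw Rwu) /=;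
        apply/negP=> Ruz; move/negP: Hu; apply; exact: (Rt _ _ _ Ruz Rzw)
      | exists w; [by rewrite !inE Tw Rzw Hw | by rewrite !inE Rr andbF]] | ]
  | exists z; split; [exact: Rr|];
    split=> // w Tw Rzw; split=> //;
    apply/negPn/negP=> Hw; apply: Hno; by exists w ]).
- by move: (leq_trans Hlt Hn).
- have [z' [Rwz' Mz']] := IH w (leq_trans Hlt Hn) Tw.
  by exists z'; split=> //; exact: (Rt _ _ _ Rzw Rwz').
Qed.

Theorem lemma5 (Q : finType) (T R P : rel Q) :
  is_preorder R -> is_equivalence P -> subrel P R ->
  ((forall b d d' : Q, P d d' ->
      (rpreimage T (rimage R (fun x => x = b)) d <->
       rpreimage T (rimage R (fun x => x = b)) d'))
   <->
   (forall c c' d : Q, P c d -> maxtrans T R c c' ->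
      exists d', rclass R c' d' /\ T d d')).
Proof.
move=> HR [Pr Ps Pt] _.
have [Rr Rt] := HR.
have E : forall b d, rpreimage T (rimage R (fun x => x = b)) d <-> exists y, R b y /\ T d y.
  move=> b d; split.
  - by move=> [y [[q [-> Rq]] Tdy]]; exists y.
  - by move=> [y [Rby Tdy]]; exists y; split=> //; exists b.
split.
- move=> H c c' d Pcd [Tcc' Mc].
  have /E [y [Rc'y Tdy]] : rpreimage T (rimage R (fun x => x = c')) d.
    by apply/(H _ _ _ Pcd)/E; exists c'; split=> //; exact: Rr.
  have /E [z [Ryz Tcz]] : rpreimage T (rimage R (fun x => x = y)) c.
    by apply/(H _ _ _ Pcd)/E; exists y; split=> //; exact: Rr.
  have [_ Rzc'] := Mc z Tcz (Rt _ _ _ Rc'y Ryz).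
  by exists y; split=> //; split=> //; exact: (Rt _ _ _ Ryz Rzc').
- move=> H b.
  have K : forall d d', P d d' -> rpreimage T (rimage R (fun x => x = b)) d ->
      rpreimage T (rimage R (fun x => x = b)) d'.
    move=> d d' Pdd' /E [y [Rby Tdy]].
    have [z [Ryz Mz]] := @exists_max Q T R d HR y Tdy.
    have [d'' [[Rzd'' _] Td'd'']] := H d z d' Pdd' Mz.
    apply/E; exists d''; split=> //.
    exact: (Rt _ _ _ (Rt _ _ _ Rby Ryz) Rzd'').
  move=> d d' Pdd'; split; first exact: K.
  by apply: K; rewrite Ps.
Qed.
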